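(* Let $J$ be a finite set, $F:\{0,1\}^{1+J}\to\mathbb{Q}_{\ge0}$ and $G:\{0,1\}^J\to\mathbb{Q}_{\ge0}$ be strictly terraced, and define $H(t)=\sum_{x\in\{0,1\}^J}F(t;x)G(x)$ for $t\in\{0,1\}$. If $H(1)>0$ then $H(0)\le(\mathrm{Prat}(F)+\mathrm{Prat}(G))H(1)$.
   Context: $1+J$ denotes the disjoint union of $\{1\}$ and $J$; elements of $\{0,1\}^{1+J}$ are written $(t;x)$. $e_i$ is the characteristic vector of $\{i\}$ and $\oplus$ is coordinatewise addition mod 2. A signature $F:\{0,1\}^I\to\mathbb{Q}_{\ge0}$ is strictly terraced if for all $x$ and $i,j\in I$, $F(x)=0$ implies $F(x\oplus e_i)=F(x\oplus e_j)$. Parity relations: $\mathrm{Even}_K(x)=1$ iff $\sum_ix_i$ even, $\mathrm{Odd}_K(x)=1$ iff $\sum_ix_i$ odd (else $0$), and their copies. A circuit $\phi$: finite set $J$ of incidences, vertices $V$ with sets $J_v$ partitioning $J$, external edges $A\subseteq J$, a partition $E$ of $J\setminus A$ into pairs, constraints $F_v:\{0,1\}^{J_v}\to\mathbb{Q}_{\ge0}$; assignments are $x$ with $x_i=x_j$ for $\{i,j\}\in E$; $[\![\phi]\!](x)=\sum_{x'}\prod_vF_v(x'|_{J_v})$ over assignments $x'$ extending $x\in\{0,1\}^A$. A copy of $F:\{0,1\}^I\to\mathbb{Q}_{\ge0}$ is $x\mapsto F(x\circ\pi)$ for a bijection $\pi$. For $F$ not identically zero, a parity-signature of $F$ is a positive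 constant multiple of $[\![\phi]\!]$ for a circuit $\phi$ with exactly one constraint a copy of $F$ and all other constraints copies of parity relations. $\mathrm{Prat}(F)=\max\{F'(0)/F'(1)\}$ over parity-signatures $F':\{0,1\}\to\mathbb{Q}_{\ge0}$ of $F$ with $F'(1)>0$; $\mathrm{Prat}(F)=0$ if $F$ is identically zero. *)

(* Defs.v *)
From HB Require Import structures.
From mathcomp Require Import all_boot all_order all_algebra.
Set Implicit Arguments. Unset Strict Implicit. Unset Printing Implicit Defensive.
Import Order.TTheory GRing.Theory Num.Theory.
Local Open Scope ring_scope.

Definition signature (I : finType) := {ffun I -> bool} -> rat.

Definition flip (I : finType) (x : {ffun I -> bool}) (i : I) : {ffun I -> bool} :=
  [ffun k => if k == i then ~~ x k else x k].

Definition strictly_terraced (I : finType) (F : signature I) : Prop :=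
  forall (x : {ffun I -> bool}) (i j : I), F x = 0 -> F (flip x i) = F (flip x j).

Definition Even (K : finType) : signature K :=
  fun x => if ~~ odd (\sum_(k : K) (x k : nat))%N then 1 else 0.
Definition Odd (K : finType) : signature K :=
  fun x => if odd (\sum_(k : K) (x k : nat))%N then 1 else 0.

Definition is_copy (I K : finType) (F : signature I) (H : signature K) : Prop :=
  exists pi : I -> K, bijective pi /\ forall x, H x = F [ffun i => x (pi i)].

(* Circuits.  inc = J (incidences), vtx = V, vof j = the vertex v with j in J_v,
   ext = A, and the partition E of J \ A into pairs is given by a fixed-point-free
   involution [mate] on J \ A (its values on A are irrelevant). *)
Record circuit := Circuit {
  inc : finType;
  vtx : finType;
  vof : inc -> vtx;
  ext : {set inc};
  mate : inc -> inc;
  mate_out : forall j, j \notin ext -> mate j \notin ext;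
  mate_neq : forall j, j \notin ext -> mate j != j;
  mate_inv : forall j, j \notin ext -> mate (mate j) = j;
  cons : forall v : vtx, signature {j : inc | vof j == v}
}.

Definition restr (phi : circuit) (x : {ffun inc phi -> bool}) (v : vtx phi)
  : {ffun {j : inc phi | vof j == v} -> bool} := [ffun j => x (val j)].

Definition ext_t (phi : circuit) := {j : inc phi | j \in ext phi}.

Definition eval (phi : circuit) (x : {ffun ext_t phi -> bool}) : rat :=
  \sum_(x' : {ffun inc phi -> bool} |
          [forall a : ext_t phi, x' (val a) == x a] &&
          [forall j, (j \notin ext phi) ==> (x' j == x' (@mate phi j))])
    \prod_(v : vtx phi) @cons phi v (restr x' v).

Definition is_parity_copy (K : finType) (H : signature K) : Prop :=
  exists L : finType, is_copy (@Even L) H \/ is_copy (@Odd L) H.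

Definition nonzero_sig (I : finType) (F : signature I) : Prop :=
  exists x, F x != 0.

Definition parity_signature (I K : finType) (F : signature I) (G : signature K) : Prop :=
  nonzero_sig F /\
  exists (phi : circuit) (c : rat) (beta : K -> ext_t phi),
    0 < c /\ bijective beta /\
    (forall x : {ffun ext_t phi -> bool}, G [ffun k => x (beta k)] = c * @eval phi x) /\
    exists v0 : vtx phi, is_copy F (@cons phi v0) /\
      forall v : vtx phi, v != v0 -> is_parity_copy (@cons phi v).

Definition ffb (b : bool) : {ffun unit -> bool} := [ffun _ => b].

Definition IsPrat (I : finType) (F : signature I) (p : rat) : Prop :=
  ((forall x, F x = 0) /\ p = 0) \/
  (nonzero_sig F /\
   (exists G : signature unit,
       parity_signature F G /\ 0 < G (ffb true) /\ p = G (ffb false) / G (ffb true)) /\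
   (forall G : signature unit,
       parity_signature F G -> 0 < G (ffb true) -> G (ffb false) / G (ffb true) <= p)).

(* (t; x) in {0,1}^{1+J}, with 1+J encoded as unit + J *)
Definition tcons (J : finType) (t : bool) (x : {ffun J -> bool}) : {ffun (unit + J)%type -> bool} :=
  [ffun k => match k with inl _ => t | inr j => x j end].

(* Main.v *)
Require Import Defs.
From HB Require Import structures.
From mathcomp Require Import all_boot all_order all_algebra.
From mathcomp Require Import ring.
Set Implicit Arguments. Unset Strict Implicit. Unset Printing Implicit Defensive.
Import Order.TTheory GRing.Theory Num.Theory.
Local Open Scope ring_scope.

Lemma sum_sig (T : finType) (P : pred T) (f : T -> nat) :
  (\sum_(k : {j | P j}) f (val k) = \sum_(j | P j) f j)%N.
Proof.
rewrite [RHS](reindex_omap (val : {j | P j} -> T) insub); last first.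
  by move=> i Pi; rewrite insubT.
by apply: eq_bigl=> -[i Pi]/=; rewrite insubT /= Pi eqxx.
Qed.

Section Gen.
Variables (I : finType) (Phi : signature I) (pin P : pred I) (a : I -> bool) (bP bQ : bool).

Definition ginc := (I + (I + unit))%type.
Definition gvtx := (unit + (bool + I))%type.
Definition gvof (j : ginc) : gvtx :=
  match j with
  | inl _ => inl tt
  | inr (inl i) => if pin i then inr (inr i) else inr (inl (P i))
  | inr (inr _) => inr (inl true)
  end.
Definition gext : {set ginc} := [set inr (inr tt)].
Definition gmate (j : ginc) : ginc :=
  match j with
  | inl i => inr (inl i)
  | inr (inl i) => inl i
  | inr (inr u) => inr (inr u)
  end.
Lemma gmate_out j : j \notin gext -> gmate j \notin gext.
Proof. by case: j => [i|[i|[]]]; rewrite !inE. Qed.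
Lemma gmate_neq j : j \notin gext -> gmate j != j.
Proof. by case: j => [i|[i|[]]]; rewrite !inE. Qed.
Lemma gmate_inv j : j \notin gext -> gmate (gmate j) = j.
Proof. by case: j => [i|[i|[]]]; rewrite !inE. Qed.

Definition target (v : gvtx) : bool :=
  match v with
  | inl _ => false
  | inr (inl true) => bP
  | inr (inl false) => bQ
  | inr (inr i) => pin i && a i
  end.

Definition gcons (v : gvtx) : signature {j : ginc | gvof j == v} :=
  match v with
  | inl _ => fun y => Phi [ffun i => if insub (inl i : ginc) is Some k then y k else false]
  | inr _ => fun y => if odd (\sum_k (y k : nat))%N == target v then 1 else 0
  end.

Definition gcirc := Circuit gmate_out gmate_neq gmate_inv gcons.
Definition gcond (s : bool) (y : {ffun I -> bool}) : bool :=
  [forall i, pin i ==> (y i == a i)] &&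
  (odd ((\sum_(i | ~~ pin i && P i) (y i : nat)) + s) == bP) &&
  (odd (\sum_(i | ~~ pin i && ~~ P i) (y i : nat)) == bQ).

Definition Psi (s : bool) : rat := \sum_(y : {ffun I -> bool} | gcond s y) Phi y.

Lemma e0_in : (inr (inr tt) : ginc) \in gext. Proof. by rewrite inE. Qed.
Definition e0 : ext_t gcirc := exist _ (inr (inr tt) : ginc) e0_in.

Lemma ext_e0 (k : ext_t gcirc) : k = e0.
Proof. apply: val_inj => /=; case: k => k /=; by rewrite inE => /eqP. Qed.

Definition gh (s : bool) (y : {ffun I -> bool}) : {ffun ginc -> bool} :=
  [ffun j => match j with inl i => y i | inr (inl i) => y i | inr (inr _) => s end].
Definition gh' (x' : {ffun ginc -> bool}) : {ffun I -> bool} := [ffun i => x' (inl i)].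

Lemma cons0 s y : @gcons (inl tt) (restr (phi := gcirc) (gh s y) (inl tt)) = Phi y.
Proof.
rewrite /=; congr Phi; apply/ffunP => i; rewrite !ffunE.
have Hi : gvof (inl i) == inl tt by [].
by rewrite (insubT (fun j => gvof j == inl tt) Hi) /= !ffunE.
Qed.

Lemma sum_v s y (r : bool + I) :
  (\sum_(k : {j : ginc | gvof j == inr r}) (gh s y (val k) : nat) =
   \sum_(i | gvof (inr (inl i)) == inr r) (y i : nat) + ((r == inl true) && s))%N.
Proof.
rewrite (sum_sig (fun j => gvof j == inr r) (fun j => (gh s y j : nat))).
rewrite big_sumType /= [X in (X + _)%N]big_pred0; last by move=> i.
rewrite add0n big_sumType /=.
congr (_ + _)%N; first by apply: eq_bigr => i _; rewrite ffunE.
rewrite big_mkcond (big_pred1 tt) /= ?ffunE; last by case.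
by case: r => [[]|i] //=; case: s.
Qed.
Lemma prod_ind (T : finType) (b : pred T) :
  \prod_(i : T) (if b i then 1 else 0 : rat) = if [forall i, b i] then 1 else 0.
Proof.
case: forallP => [H|/forallP/forallPn [i Hi]]; first by rewrite big1 // => i _; rewrite H.
by rewrite (bigD1 i) //= (negbTE Hi) mul0r.
Qed.

Lemma cons_inr s y r : @gcons (inr r) (restr (phi := gcirc) (gh s y) (inr r)) =
  if odd (\sum_(i | gvof (inr (inl i)) == inr r) (y i : nat) + ((r == inl true) && s))%N
     == target (inr r) then 1 else 0.
Proof.
rewrite -sum_v /=; congr (if odd _ == _ then _ else _).
by apply: eq_bigr => k _; rewrite ffunE.
Qed.

Lemma prod_gh s y :
  \prod_(v : gvtx) @gcons v (restr (phi := gcirc) (gh s y) v) = if gcond s y then Phi y else 0.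
Proof.
rewrite big_sumType (big_pred1 tt); last by case.
rewrite cons0 big_sumType big_bool !cons_inr /=.
have -> : (\sum_(i | (if pin i then inr (inr i) else inr (inl (P i))) == inr (inl true) :> gvtx) (y i : nat) 
          = \sum_(i | ~~ pin i && P i) (y i : nat))%N.
  by apply: eq_bigl => i; case: (pin i); case: (P i).
have -> : (\sum_(i | (if pin i then inr (inr i) else inr (inl (P i))) == inr (inl false) :> gvtx) (y i : nat) 
          = \sum_(i | ~~ pin i && ~~ P i) (y i : nat))%N.
  by apply: eq_bigl => i; case: (pin i); case: (P i).
have -> : \prod_(i : I) @gcons (inr (inr i)) (restr (phi := gcirc) (gh s y) (inr (inr i))) =
          \prod_(i : I) (if pin i ==> (y i == a i) then 1 else 0 : rat).
  apply: eq_bigr => i _; rewrite cons_inr /= addn0.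
  rewrite (eq_bigl (fun i' => pin i' && (i' == i))); last first.
    move=> i'; case: (pin i') => /=; last by case: (P i').
    by apply/eqP/eqP => [[->]|->].
  case Hp: (pin i) => /=.
    rewrite (big_pred1 i) /=; last by move=> i' /=; case: eqP => [->|_]; rewrite ?Hp ?andbF ?andbT.
    by case: (y i); case: (a i).
  by rewrite big_pred0 // => i' /=; case: eqP => [->|_]; rewrite ?Hp ?andbF.
rewrite prod_ind /gcond.
rewrite addn0; case: [forall i, _]; case: (odd _ == bP); case: (odd _ == bQ); by rewrite /= ?mulr1 ?mulr0.
Qed.
Lemma eval_gcirc (x : {ffun ext_t gcirc -> bool}) : eval x = Psi (x e0).
Proof.
rewrite /eval.
rewrite (reindex_onto (gh (x e0)) gh'); last first.
  move=> x' /andP[/forallP H1 /forallP H2]; apply/ffunP => -[i|[i|[]]]; rewrite !ffunE //.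
  - by have := H2 (inl i); rewrite inE /= => /eqP ->.
  - by have := H1 e0 => /eqP.
rewrite (eq_bigl xpredT); last first.
  move=> y; apply/andP; split; first (apply/andP; split).
  - by apply/forallP => k; rewrite (ext_e0 k) ffunE.
  - apply/forallP => -[i|[i|[]]] /=; by rewrite ?ffunE ?inE /= ?eqxx.
  - by apply/eqP/ffunP => i; rewrite !ffunE.
rewrite /Psi [RHS]big_mkcond; apply: eq_bigr => y _.
exact: prod_gh.
Qed.
Lemma gvof_inr r : gvof (inr r) == inl tt -> False.
Proof. by case: r => [i|[]] //=; case: (pin i). Qed.

Definition ginv (k : {j : ginc | gvof j == inl tt}) : I :=
  match k with exist j h =>
    (match j as j0 return gvof j0 == inl tt -> I with
     | inl i => fun _ => i
     | inr r => fun h => False_rect I (gvof_inr h) end) h end.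

Lemma gen_psig : nonzero_sig Phi -> parity_signature Phi (fun z : {ffun unit -> bool} => Psi (z tt)).
Proof.
move=> nz; split=> //.
exists gcirc, 1, (fun _ => e0); split; first exact: ltr01.
split; first by exists (fun _ => tt); [case | move=> k; rewrite (ext_e0 k)].
split; first by move=> x; rewrite ffunE mul1r eval_gcirc.
exists (inl tt); split.
- pose pi (i : I) : {j : ginc | gvof j == inl tt} := exist _ (inl i) (eqxx (inl tt : gvtx)).
  exists pi; split.
    exists ginv => // k.
    case: k => j; case: j => [i|r] Hk; [exact: val_inj | case: (gvof_inr Hk)].
  move=> y /=; congr Phi; apply/ffunP => i; rewrite !ffunE.
  have Hi : gvof (inl i) == inl tt by [].
  rewrite (insubT (fun j => gvof j == inl tt) Hi); congr (y _); exact: val_inj.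
- case=> [[]|r] // _.
  exists {j : ginc | gvof j == inr r}.
  have E y : @gcons (inr r) y = if odd (\sum_k (y k : nat))%N == target (inr r) then 1 else 0 by [].
  case Ht: (target (inr r)); [right|left]; exists id; (split; first exact: (Bijective (fun x => erefl) (fun x => erefl)));
  move=> y; rewrite [LHS]E Ht /Even /Odd; 
  (have -> : (\sum_k ([ffun i => y (id i)] k : nat) = \sum_k (y k : nat))%N by apply: eq_bigr => k _; rewrite ffunE);
  by case: (odd _).
Qed.
End Gen.


Lemma prat_le (I : finType) (Phi : signature I) p pin P a bP bQ :
  IsPrat Phi p -> nonzero_sig Phi ->
  0 < Psi Phi pin P a bP bQ true ->
  Psi Phi pin P a bP bQ false <= p * Psi Phi pin P a bP bQ true.
Proof.
move=> [[Hz _]|[_ [_ Hmax]]] [x Hx]; first by rewrite Hz eqxx in Hx.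
move=> Hpos.
have := Hmax _ (gen_psig pin P a bP bQ (ex_intro _ x Hx)).
rewrite /ffb !ffunE => /(_ Hpos).
by rewrite ler_pdivrMr.
Qed.

Definition inC (J : finType) (S : {set J}) (a w : {ffun J -> bool}) : bool :=
  [forall i, (i \in S) ==> (w i == a i)].
Definition parF (J : finType) (S : {set J}) (w : {ffun J -> bool}) : bool :=
  odd (\sum_(i | i \notin S) (w i : nat)).

Lemma sum_uJ (J : finType) (Pr : pred (unit + J)) (f : unit + J -> nat) :
  (\sum_(k | Pr k) f k = (if Pr (inl tt) then f (inl tt) else 0) + \sum_(j | Pr (inr j)) f (inr j))%N.
Proof.
rewrite big_sumType; congr (_ + _)%N.
by rewrite big_mkcond (big_pred1 tt) //; case.
Qed.

Lemma oddb_add (m : nat) (s : bool) : odd (m + s) = odd m (+) s.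
Proof. by rewrite oddD; case: s. Qed.

Lemma sum_andF (T : finType) (Pr : pred T) (f : T -> nat) :
  (\sum_(j | Pr j && false) f j = 0)%N.
Proof. by rewrite big_pred0 // => j; rewrite andbF. Qed.

Lemma tcons_l (J : finType) t (w : {ffun J -> bool}) u : tcons t w (inl u) = t.
Proof. by rewrite ffunE. Qed.
Lemma tcons_r (J : finType) t (w : {ffun J -> bool}) j : tcons t w (inr j) = w j.
Proof. by rewrite ffunE. Qed.

Section Fam.
Variables (J : finType).

Definition pinF (S : {set J}) (k : unit + J) : bool := if k is inr j then j \in S else false.
Definition PF (k : unit + J) : bool := if k is inl _ then true else false.
Definition aF (a : {ffun J -> bool}) (k : unit + J) : bool := if k is inr j then a j else false.

Lemma FF_eq (F : signature (unit + J)%type) S a b s :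
  Psi F (pinF S) PF (aF a) false b s =
  \sum_(w | inC S a w && (parF S w == b)) F (tcons s w).
Proof.
rewrite /Psi (reindex_onto (tcons s) (fun y : {ffun (unit + J) -> bool} => [ffun j => y (inr j)])); last first.
  move=> y /andP[/andP[_ H2] _]; apply/ffunP => -[[]|j]; rewrite !ffunE //.
  move: H2; rewrite sum_uJ /= sum_andF addn0 oddb_add.
  by case: (y (inl tt)); case: s.
apply: eq_bigl => w; rewrite /gcond.
have -> : [forall i, pinF S i ==> (tcons s w i == aF a i)] = inC S a w.
  apply/forallP/forallP => H i; first by have := H (inr i); rewrite /= ffunE.
  by case: i => [[]|j] //=; rewrite ffunE; apply: H.
rewrite sum_uJ /= sum_andF addn0 (tcons_l s w tt).
have -> : odd (s + s) = false by case: s.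
rewrite /= andbT sum_uJ /= add0n.
have -> : (\sum_(j | ~~ (j \in S) && true) (tcons s w (inr j) : nat) = \sum_(j | j \notin S) (w j : nat))%N.
  by rewrite (eq_bigl (fun j => j \notin S)) => [|j]; [apply: eq_bigr => j _; rewrite ffunE | rewrite andbT].
have -> : [ffun j => tcons s w (inr j)] = w by apply/ffunP => j; rewrite !ffunE.
by rewrite eqxx andbT.
Qed.

Lemma GG_eq (G : signature J) (S : {set J}) (a : {ffun J -> bool}) b s :
  Psi G (fun j => j \in S) xpredT a b false s =
  \sum_(w | inC S a w && (parF S w (+) s == b)) G w.
Proof.
rewrite /Psi; apply: eq_bigl => w; rewrite /gcond sum_andF.
rewrite andbT oddb_add.
by rewrite (eq_bigl (fun j => j \notin S)) // => j; rewrite andbT.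
Qed.
End Fam.


Lemma pos_sum_ex (T : finType) (P : pred T) (f : T -> rat) :
  0 < \sum_(i | P i) f i -> exists i, P i && (f i != 0).
Proof.
case: (pickP (fun i => P i && (f i != 0))) => [i Hi _|H]; first by exists i.
by rewrite big1 ?ltxx // => i Pi; have := H i; rewrite Pi /= => /negbFE/eqP.
Qed.

Lemma flipE (I : finType) (x : {ffun I -> bool}) i k : flip x i k = if k == i then ~~ x k else x k.
Proof. by rewrite ffunE. Qed.
Lemma flipK (I : finType) (x : {ffun I -> bool}) i : flip (flip x i) i = x.
Proof. by apply/ffunP => k; rewrite !flipE; case: eqP => // _; rewrite negbK. Qed.
Lemma flip_tl (J : finType) t (w : {ffun J -> bool}) : flip (tcons t w) (inl tt) = tcons (~~ t) w.
Proof. by apply/ffunP => -[[]|k]; rewrite !ffunE. Qed.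
Lemma flip_tr (J : finType) t (w : {ffun J -> bool}) j : flip (tcons t w) (inr j) = tcons t (flip w j).
Proof. by apply/ffunP => -[[]|k]; rewrite !ffunE //=. Qed.

Lemma parF_flip (J : finType) (S : {set J}) w i : i \notin S -> parF S (flip w i) = ~~ parF S w.
Proof.
move=> Hi; rewrite /parF (bigD1 i) // [in RHS](bigD1 i) //= flipE eqxx.
rewrite (eq_bigr (fun k => (w k : nat))); last first.
  by move=> k /andP[_ /negbTE Hk]; rewrite flipE Hk.
by rewrite !oddD; case: (w i) => /=; rewrite ?negbK.
Qed.

Lemma inC_flip (J : finType) (S : {set J}) a w i : i \notin S -> inC S a (flip w i) = inC S a w.
Proof.
move=> Hi; apply: eq_forallb => k; rewrite flipE; case: (k =P i) => // ->.
by rewrite (negbTE Hi).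
Qed.

Definition aset (J : finType) (a : {ffun J -> bool}) j b : {ffun J -> bool} :=
  [ffun i => if i == j then b else a i].

Lemma inC_aset (J : finType) (S : {set J}) a j b w : j \notin S ->
  inC (j |: S) (aset a j b) w = inC S a w && (w j == b).
Proof.
move=> Hj; apply/forallP/andP => [H|[/forallP H1 H2] k].
  split; last by have := H j; rewrite setU11 ffunE eqxx.
  apply/forallP => k; apply/implyP => Hk; have /implyP := H k.
  rewrite inE Hk orbT ffunE => /(_ isT).
  case: (k =P j) => [Ek|_] //; by rewrite -Ek Hk in Hj.
apply/implyP; rewrite !inE ffunE; case: (k =P j) => [->|_] //= Hk.
exact: (implyP (H1 k)).
Qed.

Lemma inC_setT (J : finType) (a w : {ffun J -> bool}) : inC setT a w = (w == a).
Proof.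
apply/forallP/eqP => [H|->]; last by move=> k; rewrite eqxx implybT.
by apply/ffunP => k; have := H k; rewrite in_setT => /eqP.
Qed.

Lemma parF_setT (J : finType) (w : {ffun J -> bool}) : parF setT w = false.
Proof. by rewrite /parF big_pred0 // => k; rewrite in_setT. Qed.


Section Main.
Variables (J : finType) (F : signature (unit + J)%type) (G : signature J) (pF pG : rat).
Hypotheses (F_ge0 : forall x, 0 <= F x) (G_ge0 : forall x, 0 <= G x)
  (F_terr : strictly_terraced F) (G_terr : strictly_terraced G)
  (hpF : IsPrat F pF) (hpG : IsPrat G pG).

Notation F1 w := (F (tcons true w)).
Notation F0 w := (F (tcons false w)).

Definition HC (S : {set J}) (a : {ffun J -> bool}) t := \sum_(w | inC S a w) F (tcons t w) * G w.

Lemma FF (S : {set J}) a b :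
  0 < \sum_(w | inC S a w && (parF S w == b)) F1 w ->
  \sum_(w | inC S a w && (parF S w == b)) F0 w <= pF * \sum_(w | inC S a w && (parF S w == b)) F1 w.
Proof.
rewrite -!FF_eq => H; have [y /andP[_ Hy]] := pos_sum_ex H.
by apply: prat_le hpF _ H; exists y.
Qed.

Lemma GG (S : {set J}) a b :
  0 < \sum_(w | inC S a w && (parF S w != b)) G w ->
  \sum_(w | inC S a w && (parF S w == b)) G w <= pG * \sum_(w | inC S a w && (parF S w != b)) G w.
Proof.
have E2 : \sum_(w | inC S a w && (parF S w != b)) G w = Psi G (fun j => j \in S) xpredT a b false true.
  by rewrite GG_eq; apply: eq_bigl => w; case: (parF S w); case: b.
have E1 : \sum_(w | inC S a w && (parF S w == b)) G w = Psi G (fun j => j \in S) xpredT a b false false.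
  by rewrite GG_eq; apply: eq_bigl => w; rewrite addbF.
rewrite E1 E2 => H; have [y /andP[_ Hy]] := pos_sum_ex H.
by apply: prat_le hpG _ H; exists y.
Qed.

Lemma PIN w : 0 < F1 w -> F0 w <= pF * F1 w.
Proof.
have E t : \sum_(w' | inC setT w w' && (parF setT w' == false)) F (tcons t w') = F (tcons t w).
  by rewrite (big_pred1 w) // => w'; rewrite inC_setT parF_setT andbT.
by move=> H; have := FF (S := setT) (a := w) (b := false); rewrite !E; apply.
Qed.

Lemma pG_ge0 w : 0 < G w -> 0 <= pG.
Proof.
have E1 : \sum_(w' | inC setT w w' && (parF setT w' != true)) G w' = G w.
  by rewrite (big_pred1 w) // => w'; rewrite inC_setT parF_setT andbT.
have E2 : \sum_(w' | inC setT w w' && (parF setT w' == true)) G w' = 0.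
  by rewrite big_pred0 // => w'; rewrite parF_setT andbF.
move=> H; have := GG (S := setT) (a := w) (b := true); rewrite E1 E2 => /(_ H).
by rewrite pmulr_lge0.
Qed.

Section Bad.
Variables (S : {set J}) (a : {ffun J -> bool}) (j : J) (b : bool) (x : {ffun J -> bool}).
Hypotheses (Hj : j \notin S) (Hx : inC (j |: S) (aset a j b) x) (HF1x : F1 x = 0)
  (Hc : 0 < F0 x) (Hg : 0 < G x)
  (Hface : forall w, inC (j |: S) (aset a j b) w -> F1 w * G w = 0).

Definition diff (w : {ffun J -> bool}) : {set J} := [set i | w i != x i].

Lemma face_diff w i : inC (j |: S) (aset a j b) w -> i \in diff w -> i \notin j |: S.
Proof.
move=> /forallP Hw; rewrite inE => Hi; apply/negP => HS.
have := Hw i; have := forallP Hx i; rewrite HS /= => /eqP Hxi /eqP Hwi.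
by rewrite Hxi Hwi eqxx in Hi.
Qed.

Lemma diff_flip w i : i \in diff w -> (#|diff (flip w i)| < #|diff w|)%N.
Proof.
move=> Hi; rewrite [X in (_ < X)%N](cardsD1 i) Hi add1n ltnS.
apply: subset_leq_card; apply/subsetP => k; rewrite !inE flipE.
case: (k =P i) => [->|_] /=; last by move=> ->.
by move: Hi; rewrite inE; case: (w i); case: (x i).
Qed.

Lemma diff0 v : diff v = set0 -> v = x.
Proof.
move=> H0; apply/ffunP => k; apply/eqP; apply: contraT => Hk.
have : k \in diff v by rewrite inE.
by rewrite H0 inE.
Qed.

Lemma nb v : inC (j |: S) (aset a j b) v -> parF S v != parF S x ->
  exists i, [/\ i \notin j |: S, inC (j |: S) (aset a j b) (flip v i),
             parF S (flip v i) == parF S x & (#|diff (flip v i)| < #|diff v|)%N].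
Proof.
move=> Hv Hp; case: (set_0Vmem (diff v)) => [H0|[i Hi]].
  by rewrite (diff0 H0) eqxx in Hp.
have Hi' := face_diff Hv Hi.
have HiS : i \notin S by move: Hi'; rewrite inE negb_or => /andP[].
exists i; split => //; first by rewrite inC_flip.
- by rewrite parF_flip //; move: Hp; case: (parF S v); case: (parF S x).
- exact: diff_flip.
Qed.

Definition Pw w : Prop := (parF S w == parF S x -> [/\ F1 w = 0, G w = G x & F0 w = F0 x]) /\ (parF S w != parF S x -> G w = 0 /\ F1 w = F0 x).

Lemma Pwx : Pw x.
Proof. by split=> [_|]; [split | rewrite eqxx]. Qed.

Lemma claim n w : inC (j |: S) (aset a j b) w -> (#|diff w| <= n)%N -> Pw w.
Proof.
elim: n w => [|n IH] w Hw Hn.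
  by move: Hn; rewrite leqn0 => /eqP/cards0_eq/diff0 ->; exact: Pwx.
case: (leqP #|diff w| n) => [Hle|Hgt]; first exact: IH.
case: (set_0Vmem (diff w)) => [/diff0 ->|[i Hi]]; first exact: Pwx.
have Hi' := face_diff Hw Hi.
have HiS : i \notin S by move: Hi'; rewrite inE negb_or => /andP[].
set w' := flip w i.
have Hw' : inC (j |: S) (aset a j b) w' by rewrite inC_flip.
have Hd' : (#|diff w'| <= n)%N.
  by have := diff_flip Hi; rewrite -/w' => H; rewrite -ltnS; apply: leq_trans H Hn.
have Hpar : parF S w' = ~~ parF S w by rewrite parF_flip.
have Eww : flip w' i = w by rewrite flipK.
have [IH1 IH2] := IH w' Hw' Hd'.
have Gx0 : G x != 0 by rewrite gt_eqF.
have Fx0 : F0 x != 0 by rewrite gt_eqF.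
split => Hp.
- have Hp' : parF S w' != parF S x by rewrite Hpar (eqP Hp); case: (parF S x).
  have [Gw' F1w'] := IH2 Hp'.
  have [i' [_ Hi'2 Hi'3 Hi'4]] := nb Hw' Hp'.
  have [_ Gw'' _] := (IH (flip w' i') Hi'2 (leq_trans (ltnW Hi'4) Hd')).1 Hi'3.
  have HG : G w = G x by rewrite -Gw'' -Eww; apply: G_terr.
  have HF1 : F1 w = 0.
    by have /eqP := Hface Hw; rewrite mulf_eq0 HG (negbTE Gx0) orbF => /eqP.
  split=> //.
  have := F_terr (inl tt) (inr i) HF1.
  by rewrite flip_tl flip_tr /= -/w' => ->.
- have Hp' : parF S w' == parF S x by move: Hp; rewrite Hpar; case: (parF S w); case: (parF S x).
  have [F1w' Gw' F0w'] := IH1 Hp'.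
  have HF1 : F1 w = F0 x.
    have := F_terr (inr i) (inl tt) F1w'.
    by rewrite flip_tl flip_tr Eww /= F0w'.
  split=> //.
  by have /eqP := Hface Hw; rewrite mulf_eq0 HF1 (negbTE Fx0) /= => /eqP.
Qed.

Lemma claimF w : inC (j |: S) (aset a j b) w -> Pw w.
Proof. by move=> Hw; apply: (claim (n := #|diff w|)). Qed.

Lemma ext_face w : inC S a w -> w j != b ->
  [/\ inC (j |: S) (aset a j b) (flip w j), parF S (flip w j) = ~~ parF S w & flip (flip w j) j = w].
Proof.
move=> Hw Hwj; split; last by rewrite flipK.
- by rewrite inC_aset // inC_flip // Hw flipE eqxx; move: Hwj; case: (w j); case: b.
- by rewrite parF_flip.
Qed.

Lemma ext_i w : inC S a w -> parF S w == parF S x -> G w = G x.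
Proof.
move=> Hw Hp; case Hwj: (w j == b).
  have Hf : inC (j |: S) (aset a j b) w by rewrite inC_aset // Hw Hwj.
  by case: ((claimF Hf).1 Hp).
have [Hf Hpar Ew] := ext_face Hw (negbT Hwj).
have Hp' : parF S (flip w j) != parF S x by rewrite Hpar (eqP Hp); case: (parF S x).
have [Gw' _] := (claimF Hf).2 Hp'.
have [i' [_ Hi'2 Hi'3 _]] := nb Hf Hp'.
have [_ Gw'' _] := (claimF Hi'2).1 Hi'3.
by rewrite -Gw'' -{1}Ew; apply: G_terr.
Qed.

Lemma ext_ii w : inC S a w -> parF S w != parF S x -> F1 w = F0 x.
Proof.
move=> Hw Hp; case Hwj: (w j == b).
  have Hf : inC (j |: S) (aset a j b) w by rewrite inC_aset // Hw Hwj.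
  by case: ((claimF Hf).2 Hp).
have [Hf Hpar Ew] := ext_face Hw (negbT Hwj).
have Hp' : parF S (flip w j) == parF S x by move: Hp; rewrite Hpar; case: (parF S w); case: (parF S x).
have [F1w' _ F0w'] := (claimF Hf).1 Hp'.
have := F_terr (inr j) (inl tt) F1w'.
by rewrite flip_tl flip_tr Ew /= F0w'.
Qed.

Lemma ext_iii w : inC S a w -> parF S w == parF S x -> F1 w = 0 -> F0 w = F0 x.
Proof.
move=> Hw Hp HF1.
have := F_terr (inl tt) (inr j) HF1; rewrite flip_tl flip_tr /= => ->.
apply: ext_ii; first by rewrite inC_flip.
by rewrite parF_flip // (eqP Hp); case: (parF S x).
Qed.

Lemma bad_main : 0 < HC S a true -> HC S a false <= (pF + pG) * HC S a true.
Proof.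
move=> Hpos.
have pG0 : 0 <= pG := pG_ge0 Hg.
have H1ge0 : 0 <= HC S a true by apply: ltW.
have SP t : \sum_(w | inC S a w) F (tcons t w) * G w =
   \sum_(w | inC S a w && (parF S w == parF S x)) F (tcons t w) * G w +
   \sum_(w | inC S a w && (parF S w != parF S x)) F (tcons t w) * G w.
  by rewrite (bigID (fun w => parF S w == parF S x)).
move: Hpos H1ge0; rewrite /HC !SP.
set A1 := \sum_(w | inC S a w && (parF S w == parF S x)) F1 w.
set A0 := \sum_(w | inC S a w && (parF S w == parF S x)) F0 w.
set SG := \sum_(w | inC S a w && (parF S w == parF S x)) G w.
set SG' := \sum_(w | inC S a w && (parF S w != parF S x)) G w.
set R0 := \sum_(w | inC S a w && (parF S w != parF S x)) F0 w * G w.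
set R1 := \sum_(w | inC S a w && (parF S w != parF S x)) F1 w * G w.
have ET t : \sum_(w | inC S a w && (parF S w == parF S x)) F (tcons t w) * G w =
            (\sum_(w | inC S a w && (parF S w == parF S x)) F (tcons t w)) * G x.
  by rewrite big_distrl; apply: eq_bigr => w /andP[Hw Hp]; rewrite ext_i.
have ER1 : R1 = F0 x * SG'.
  by rewrite /R1 /SG' mulr_sumr; apply: eq_bigr => w /andP[Hw Hp]; rewrite ext_ii.
have HR : R0 <= pF * R1.
  rewrite /R0 /R1 mulr_sumr; apply: ler_sum => w /andP[Hw Hp].
  rewrite mulrA; apply: ler_wpM2r; first exact: G_ge0.
  by apply: PIN; rewrite ext_ii.
rewrite !ET -/A1 -/A0 -/R0 -/R1.
have A1ge0 : 0 <= A1 by apply: sumr_ge0.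
have [A1pos|A1le] := ltrP 0 A1.
  have HA := FF A1pos.
  have Gx0 : 0 <= G x by apply: ltW.
  move=> _ H1; have : A0 * G x <= pF * A1 * G x by rewrite ler_wpM2r.
  move=> HAG; apply: (le_trans (lerD HAG HR)).
  rewrite -mulrA -mulrDr mulrDl lerDl; exact: mulr_ge0.
have A10 : A1 = 0 by apply/eqP; rewrite eq_le A1le A1ge0.
have HF1T : forall w, inC S a w && (parF S w == parF S x) -> F1 w = 0.
  by move=> w Hw; apply: (psumr_eq0P _ A10) => // w' _; apply: F_ge0.
have E0 : A0 * G x = F0 x * SG.
  rewrite -ET /SG mulr_sumr; apply: eq_bigr => w /andP[Hw Hp].
  by rewrite (ext_iii Hw Hp) ?(HF1T w) ?Hw ?Hp.
rewrite E0 A10 mul0r add0r ER1 => Hp1 _.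
have SG'pos : 0 < SG' by rewrite -(pmulr_rgt0 _ Hc).
have HGG := GG SG'pos.
have : F0 x * SG <= F0 x * (pG * SG') by rewrite ler_wpM2l // ltW.
move: HR; rewrite ER1 => HR HS; apply: (le_trans (lerD HS HR)).
by rewrite le_eqVlt; apply/orP; left; apply/eqP; ring.
Qed.

End Bad.
Lemma HC_ge0 (S : {set J}) (a : {ffun J -> bool}) t : 0 <= HC S a t.
Proof. by apply: sumr_ge0 => w _; apply: mulr_ge0. Qed.

Lemma bad_face (S : {set J}) (a : {ffun J -> bool}) (j : J) (b : bool) : j \notin S ->
  HC (j |: S) (aset a j b) true = 0 -> 0 < HC (j |: S) (aset a j b) false ->
  0 < HC S a true -> HC S a false <= (pF + pG) * HC S a true.
Proof.
move=> Hj H1 H0.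
have [x /andP[Hx Hx0]] := pos_sum_ex H0.
move: Hx0; rewrite mulf_eq0 negb_or => /andP[Fx0 Gx0].
have Hface : forall w, inC (j |: S) (aset a j b) w -> F1 w * G w = 0.
  by move=> w Hw; apply: (psumr_eq0P _ H1) => // w' _; apply: mulr_ge0.
have HF1x : F1 x = 0.
  by have /eqP := Hface x Hx; rewrite mulf_eq0 (negbTE Gx0) orbF => /eqP.
apply: (bad_main Hj Hx HF1x _ _ Hface).
- by rewrite lt0r Fx0 F_ge0.
- by rewrite lt0r Gx0 G_ge0.
Qed.

Lemma HC_split (S : {set J}) (a : {ffun J -> bool}) (j : J) t : j \notin S ->
  HC S a t = HC (j |: S) (aset a j true) t + HC (j |: S) (aset a j false) t.
Proof.
move=> Hj; rewrite /HC (bigID (fun w : {ffun J -> bool} => w j)) /=; congr (_ + _); apply: eq_bigl => w;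
  rewrite inC_aset //; by case: (w j).
Qed.

Lemma mainI n : forall (S : {set J}) (a : {ffun J -> bool}), #|~: S| = n -> 0 < HC S a true -> HC S a false <= (pF + pG) * HC S a true.
Proof.
elim: n => [|n IH] S a Hn Hpos.
  have ES : S = setT by rewrite -[S]setCK (cards0_eq Hn) setC0.
  subst S.
  have E t : HC setT a t = F (tcons t a) * G a.
    by rewrite /HC (big_pred1 a) // => w; rewrite inC_setT.
  move: Hpos; rewrite !E => Hpos.
  have Ga0 : G a != 0 by apply/eqP => H; rewrite H mulr0 ltxx in Hpos.
  have Fa0 : F1 a != 0 by apply/eqP => H; rewrite H mul0r ltxx in Hpos.
  have Gpos : 0 < G a by rewrite lt0r Ga0 G_ge0.
  have Fpos : 0 < F1 a by rewrite lt0r Fa0 F_ge0.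
  have pG0 := pG_ge0 Gpos.
  apply: (le_trans (ler_wpM2r (G_ge0 a) (PIN Fpos))).
  by rewrite -mulrA ler_wpM2r ?mulr_ge0 ?G_ge0 ?F_ge0 // lerDl.
case: (set_0Vmem (~: S)) => [H0|[j Hj]]; first by rewrite H0 cards0 in Hn.
have HjS : j \notin S by rewrite inE in Hj.
have Hn' : #|~: (j |: S)| = n.
  have -> : ~: (j |: S) = (~: S) :\ j by apply/setP => k; rewrite !inE negb_or andbC.
  by move: Hn; rewrite (cardsD1 j) Hj add1n => -[].
have IHb b : 0 < HC (j |: S) (aset a j b) true ->
    HC (j |: S) (aset a j b) false <= (pF + pG) * HC (j |: S) (aset a j b) true.
  exact: IH.
have key b : HC (j |: S) (aset a j b) true = 0 ->
    HC S a false <= (pF + pG) * HC S a true.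
  move=> Hb.
  have [Hb0|Hb0] := ltrP 0 (HC (j |: S) (aset a j b) false); first exact: bad_face HjS Hb Hb0 Hpos.
  have Hb0' : HC (j |: S) (aset a j b) false = 0.
    by apply/eqP; rewrite eq_le Hb0 HC_ge0.
  have Eq t : HC S a t = HC (j |: S) (aset a j (~~ b)) t + HC (j |: S) (aset a j b) t.
    by rewrite (HC_split a t HjS); case: b {Hb Hb0 Hb0'} => //=; rewrite addrC.
  move: Hpos; rewrite !Eq Hb Hb0' !addr0; exact: IHb.
have [P1|P1] := ltrP 0 (HC (j |: S) (aset a j true) true); last first.
  by apply: (key true); apply/eqP; rewrite eq_le P1 HC_ge0.
have [P0|P0] := ltrP 0 (HC (j |: S) (aset a j false) true); last first.
  by apply: (key false); apply/eqP; rewrite eq_le P0 HC_ge0.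
rewrite !(HC_split a _ HjS) mulrDr.
exact: lerD (IHb _ P1) (IHb _ P0).
Qed.

End Main.

Theorem lemma15 (J : finType) (F : signature (unit + J)%type) (G : signature J)
  (pF pG : rat)
  (F_ge0 : forall x, 0 <= F x) (G_ge0 : forall x, 0 <= G x)
  (F_terr : strictly_terraced F) (G_terr : strictly_terraced G)
  (hpF : IsPrat F pF) (hpG : IsPrat G pG) :
  let H := fun t : bool => \sum_(x : {ffun J -> bool}) F (tcons t x) * G x in
  0 < H true -> H false <= (pF + pG) * H true.
Proof.
move=> H.
pose a0 : {ffun J -> bool} := [ffun _ => false].
have E t : H t = HC F G set0 a0 t.
  by rewrite /H /HC; apply: eq_bigl => w; apply/esym/forallP => k; rewrite inE.
rewrite !E.
exact: (mainI F_ge0 G_ge0 F_terr G_terr hpF hpG (erefl #|~: (set0 : {set J})|)).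
Qed.
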